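(* Let $\beta>0$ and let $N$ be a nonnegative integer random variable with $P(N\ge n)=1-e^{-\beta/n}$ for all integers $n\ge1$. Let $0<p<1$. For the one-dimensional oriented percolation with random range with bond parameter $p$, if $\beta>1/p$ then $\theta(p,0)=P(0\to\infty)>0$.
   Context: One-dimensional percolation with random range (equivalently, the APRR model with $q=0$, restricted to the line through the origin in direction $\vec e_1$). Let $\mathbf N=(N_i)_{i\in\mathbb{Z}}$ be i.i.d. with law $N$, and let $G_{\mathbf N}$ be the oriented graph on $\mathbb{Z}$ with bonds $\{(i,i+n): i\in\mathbb{Z},\ 1\le n\le N_i\}$. Given $p\in[0,1]$, each bond of $G_{\mathbf N}$ is open independently with probability $p$. $(0\to\infty)$ is the event that $0$ is connected by oriented open paths to infinitely many vertices, and $\theta(p,0)=P(0\to\infty)$. *)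

(* Defs.v *)
From HB Require Import structures.
From mathcomp Require Import all_boot all_order all_algebra.
From mathcomp Require Import all_classical all_reals all_analysis.
Set Implicit Arguments. Unset Strict Implicit. Unset Printing Implicit Defensive.
Import Order.TTheory GRing.Theory Num.Theory.
Local Open Scope classical_set_scope.
Local Open Scope ring_scope.

(* Model of one-dimensional oriented percolation with random range on Z,
   realized on a probability space (T, P):
   - Nr i : T -> nat  is the range N_i at site i;
   - Bo i k : T -> bool says whether the bond (i, i + (k+1)) is open
     (k+1 ranges over all n >= 1; only those with n <= N_i are bonds of G_N). *)

Definition pidx := (int + (int * nat))%type.

Definition pvar (T : Type) (Nr : int -> T -> nat) (Bo : int -> nat -> T -> bool)
  (j : pidx) (t : T) : nat :=
  match j with
  | inl i => Nr i t
  | inr (i, k) => nat_of_bool (Bo i k t)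
  end.

Definition discrete_mutually_independent d (T : measurableType d) (R : realType)
  (P : probability T R) (I : eqType) (X : I -> T -> nat) : Prop :=
  forall (s : seq I) (x : I -> nat), uniq s ->
    P (\bigcap_(j in [set j | j \in s]) (X j @^-1` [set x j]))
    = \big[*%E/1%E]_(j <- s) P (X j @^-1` [set x j]).

Definition open_edge (T : Type) (Nr : int -> T -> nat) (Bo : int -> nat -> T -> bool)
  (t : T) (a b : int) : Prop :=
  exists k : nat, b = a + (k.+1)%:Z /\ (k.+1 <= Nr a t)%N /\ Bo a k t.

Inductive connected (T : Type) (Nr : int -> T -> nat) (Bo : int -> nat -> T -> bool)
  (t : T) : int -> int -> Prop :=
  | conn_refl a : connected Nr Bo t a a
  | conn_step a b c : open_edge Nr Bo t a b -> connected Nr Bo t b c ->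
                      connected Nr Bo t a c.

Definition perc_event (T : Type) (Nr : int -> T -> nat) (Bo : int -> nat -> T -> bool)
  : set T :=
  [set t | infinite_set [set v : int | connected Nr Bo t 0 v]].

(* Main.v *)
From Pilot Require Import Defs.
From HB Require Import structures.
From mathcomp Require Import all_boot all_order all_algebra.
From mathcomp Require Import all_classical all_reals all_analysis.
From mathcomp Require Import ring lra zify.
Import Order.TTheory GRing.Theory Num.Theory.
Local Open Scope classical_set_scope.
Local Open Scope ring_scope.
Set Implicit Arguments. Unset Strict Implicit. Unset Printing Implicit Defensive.

Section Indep.
Local Open Scope ereal_scope.
Context (d : measure_display) (T : measurableType d) (R : realType)
  (P : probability T R) (Nr : int -> T -> nat) (Bo : int -> nat -> T -> bool).
Hypothesis mN : forall i k, measurable [set t | Nr i t = k].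
Hypothesis mB : forall i k, measurable [set t | Bo i k t].
Hypothesis ind : discrete_mutually_independent P (pvar Nr Bo).

Let X := pvar Nr Bo.

Lemma mXpt j x : measurable (X j @^-1` [set x]).
Proof.
case: j => [i|[i k]]; first exact: mN.
case: x => [|[|x]].
- rewrite (_ : _ @^-1` _ = ~` [set t | Bo i k t]); first exact/measurableC/mB.
  by apply/seteqP; split => t /=; case: (Bo i k t).
- rewrite (_ : _ @^-1` _ = [set t | Bo i k t]); first exact/mB.
  by apply/seteqP; split => t /=; case: (Bo i k t).
- rewrite (_ : _ @^-1` _ = set0) //.
  by apply/seteqP; split => t /=; case: (Bo i k t).
Qed.

Lemma mX j (S : set nat) : measurable (X j @^-1` S).
Proof.
rewrite (_ : _ @^-1` _ = \bigcup_(v in S) X j @^-1` [set v]).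
  by apply: bigcup_measurable => v _; exact: mXpt.
by apply/seteqP; split => t /=; [move=> h; exists (X j t) | case=> v Sv ->].
Qed.

Definition ev (s : seq pidx) (Y : pidx -> set nat) : set T :=
  [set t | forall j, j \in s -> Y j (X j t)].

Lemma ev_nil Y : ev [::] Y = setT.
Proof. by apply/seteqP; split => t //= _ j. Qed.

Lemma ev_cons j s Y : ev (j :: s) Y = X j @^-1` Y j `&` ev s Y.
Proof.
apply/seteqP; split => t /=.
  by move=> h; split; [apply: h; rewrite inE eqxx | move=> i ins; apply: h; rewrite inE ins orbT].
by case=> h1 h2 i; rewrite inE => /orP[/eqP ->|]//; exact: h2.
Qed.

Lemma mev s Y : measurable (ev s Y).
Proof.
elim: s => [|j s ih]; first by rewrite ev_nil.
by rewrite ev_cons; apply: measurableI => //; exact: mX.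
Qed.

Lemma Pfin (A : set T) : measurable A -> P A \is a fin_num.
Proof. by move=> mA; rewrite fin_num_measure. Qed.

Lemma L1aux (t s : seq pidx) (Y : pidx -> set nat) (x : pidx -> nat) :
  uniq (t ++ s) ->
  P (ev t Y `&` ev s (fun j => [set x j])) =
  \prod_(j <- t) P (X j @^-1` Y j) * \prod_(j <- s) P (X j @^-1` [set x j]).
Proof.
elim: t s x => [|i t ih] s x /=.
  move=> us; rewrite ev_nil setTI big_nil mul1e -ind //.
move=> /andP[nis us].
pose x' v := fun j => if j == i then v else x j.
have E : ev (i :: t) Y `&` ev s (fun j => [set x j]) =
   \bigcup_(v in Y i) (ev t Y `&` ev (i :: s) (fun j => [set x' v j])).
  apply/seteqP; split => u /=.
    rewrite ev_cons => -[[Yi ht] hs]; exists (X i u) => //; split => //.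
    rewrite ev_cons; split; first by rewrite /x' /= eqxx.
    move=> j js /=; rewrite /x'; case: eqP => [ji|_]; last exact: hs.
    by move: nis; rewrite mem_cat -ji js orbT.
  case=> v Yv [ht]; rewrite ev_cons => -[/= Xi hs].
  rewrite ev_cons; split; first split => //.
    by rewrite /preimage /= Xi /x' eqxx.
  move=> j js; have := hs j js; rewrite /x' /=; case: eqP => // ji.
  by move: nis; rewrite mem_cat -ji js orbT.
have tF : trivIset (Y i) (fun v => ev t Y `&` ev (i :: s) (fun j => [set x' v j])).
  move=> v w _ _ [u [[_ h1] [_ h2]]].
  move: h1 h2; rewrite !ev_cons /= /x' eqxx => -[-> _] [-> _] //.
rewrite E measure_bigcup //; last by move=> v _; exact: measurableI (mev _ _) (mev _ _).
have ust : uniq (t ++ i :: s).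
  by rewrite -cat1s uniq_catCA cat1s /= nis us.
set c1 := \prod_(j <- t) P (X j @^-1` Y j).
set c2 := \prod_(j <- s) P (X j @^-1` [set x j]).
have c1f : c1 \is a fin_num by apply: prode_fin_num => j _; exact/Pfin/mX.
have c2f : c2 \is a fin_num by apply: prode_fin_num => j _; exact/Pfin/mX.
transitivity (\sum_(v <oo | v \in Y i) ((fine (c1 * c2))%:E * P (X i @^-1` [set v]))).
  apply: eq_eseriesr => v _.
  etransitivity; first exact: (ih (i :: s) (x' v) ust).
  rewrite big_cons /x' eqxx.
  rewrite (@eq_big_seq _ _ _ _ s _ (fun j => P (X j @^-1` [set x j]))); last first.
    move=> j js; have ji : j != i.
      by apply: contraNneq nis => ji; rewrite mem_cat -ji js orbT.
    by rewrite (negbTE ji).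
  by rewrite fineK ?fin_numM // /c1 /c2 [P _ * _]muleC muleA.
rewrite nneseriesZl //.
rewrite fineK ?fin_numM // big_cons.
have -> : X i @^-1` Y i = \bigcup_(v in Y i) X i @^-1` [set v].
  by apply/seteqP; split => u /=; [move=> h; exists (X i u) | case=> v Sv ->].
rewrite measure_bigcup //; last 2 first.
- by move=> v _; exact: mXpt.
- by move=> v w _ _ [u [/= -> ->]].
by rewrite /c1 /c2 muleC muleA.
Qed.
Lemma L1 (s : seq pidx) (Y : pidx -> set nat) : uniq s ->
  P (ev s Y) = \prod_(j <- s) P (X j @^-1` Y j).
Proof.
move=> us; have := @L1aux s [::] Y (fun _ => 0%N); rewrite cats0 => /(_ us).
by rewrite ev_nil setIT big_nil mule1.
Qed.

Definition mrg (a : seq pidx) (Y1 Y2 : pidx -> set nat) := fun i => if i \in a then Y1 i else Y2 i.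

Lemma ev_cat a b Y1 Y2 : (forall i, i \in a -> i \notin b) ->
  ev (a ++ b) (mrg a Y1 Y2) = ev a Y1 `&` ev b Y2.
Proof.
move=> dab; apply/seteqP; split => u /=.
  move=> h; split => i ia.
    by have := h i; rewrite mem_cat ia /mrg ia => /(_ isT).
  have := h i; rewrite mem_cat ia orbT /mrg => /(_ isT).
  by case: ifP => // ai; move: (dab i ai); rewrite ia.
case=> h1 h2 i; rewrite mem_cat /mrg => /orP[ia|ib]; first by rewrite ia; exact: h1.
by case: ifP => ia; [exact: h1 | exact: h2].
Qed.

Lemma Pev_cat a b Y1 Y2 : uniq a -> uniq b -> (forall i, i \in a -> i \notin b) ->
  P (ev (a ++ b) (mrg a Y1 Y2)) = P (ev a Y1) * P (ev b Y2).
Proof.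
move=> ua ub dab; have uab : uniq (a ++ b).
  rewrite cat_uniq ua ub andbT /=; apply/hasPn => i ib; apply/negP => ia.
  by move: (dab i ia); rewrite ib.
rewrite L1 // big_cat /= !L1 //; congr (_ * _).
  by apply: eq_big_seq => i ia; rewrite /mrg ia.
apply: eq_big_seq => i ib; rewrite /mrg; case: ifP => // ia.
by move: (dab i ia); rewrite ib.
Qed.

Section L2sec.
Variables (c : nat -> seq pidx) (YU YV : pidx -> set nat).
Definition W (js : seq nat) : set T :=
  [set t | forall j, j \in js -> (ev (c j) YU `|` ev (c j) YV) t].

Lemma mW js : measurable (W js).
Proof.
elim: js => [|k l ihl].
  by rewrite (_ : W [::] = setT) //; apply/seteqP; split => u //= _ k.
rewrite (_ : W (k :: l) = (ev (c k) YU `|` ev (c k) YV) `&` W l).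
  by apply: measurableI => //; apply: measurableU; exact: mev.
apply/seteqP; split => u /=.
  by move=> h; split => [|k' kl]; apply: h; rewrite inE ?eqxx ?kl ?orbT.
by case=> h1 h2 k'; rewrite inE => /orP[/eqP ->|]//; exact: h2.
Qed.

Lemma L2 (js : seq nat) (r : seq pidx) (YR : pidx -> set nat) :
  uniq js -> (forall j, j \in js -> uniq (c j)) ->
  (forall j j' i, j \in js -> j' \in js -> i \in c j -> i \in c j' -> j = j') ->
  uniq r -> (forall j i, j \in js -> i \in c j -> i \notin r) ->
  (forall j, j \in js -> ev (c j) YU `&` ev (c j) YV = set0) ->
  P (W js `&` ev r YR) =
  \prod_(j <- js) (P (ev (c j) YU) + P (ev (c j) YV)) * P (ev r YR).
Proof.
elim: js r YR => [|j js ih] r YR ujs uc dc ur dr dUV.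
  rewrite big_nil mul1e (_ : W [::] = setT) ?setTI //.
  by apply/seteqP; split => u //= _ j.
move: ujs => /= /andP[njs ujs].
have jj : j \in j :: js by rewrite mem_head.
have jl : forall k, k \in js -> k \in j :: js by move=> k kjs; rewrite inE kjs orbT.
have uc' : forall k, k \in js -> uniq (c k) by move=> k /jl; exact: uc.
have dc' : forall k k' i, k \in js -> k' \in js -> i \in c k -> i \in c k' -> k = k'.
  by move=> k k' i /jl h /jl h'; exact: dc.
have dUV' : forall k, k \in js -> ev (c k) YU `&` ev (c k) YV = set0.
  by move=> k /jl; exact: dUV.
have dj : forall i, i \in c j -> i \notin r by move=> i; apply: dr; rewrite inE eqxx.
have E : W (j :: js) `&` ev r YR =
    (W js `&` ev (c j ++ r) (mrg (c j) YU YR)) `|` (W js `&` ev (c j ++ r) (mrg (c j) YV YR)).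
  rewrite !ev_cat //; apply/seteqP; split => u /=.
    case=> h hr; have [hu|hv] := h j (mem_head _ _).
      by left; split => [k kjs|]; [apply: h; rewrite inE kjs orbT | ].
    by right; split => [k kjs|]; [apply: h; rewrite inE kjs orbT | ].
  case=> -[h [hj hr]]; (split => //; move=> k; rewrite inE => /orP[/eqP ->|]; [|exact: h]); by [left|right].
have dr' : forall k i, k \in js -> i \in c k -> i \notin c j ++ r.
  move=> k i kjs ick; rewrite mem_cat negb_or; apply/andP; split.
    apply/negP => icj; have kj := dc _ _ _ (jl _ kjs) jj ick icj.
    by move: kjs; rewrite kj (negbTE njs).
  by apply: (dr k) => //; rewrite inE kjs orbT.
have ucr : uniq (c j ++ r).
  rewrite cat_uniq (uc _ jj) ur andbT /=; apply/hasPn => i ir; apply/negP => ic.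
  by move: (dj i ic); rewrite ir.
transitivity (P (W js `&` ev (c j ++ r) (mrg (c j) YU YR)) + P (W js `&` ev (c j ++ r) (mrg (c j) YV YR))).
rewrite E measureU //; last first.
- apply/seteqP; split => // u /= [[_ h1] [_ h2]].
  rewrite !(ev_cat _ _ dj) in h1 h2.
  have : (ev (c j) YU `&` ev (c j) YV) u by split; [case: h1 | case: h2].
  by rewrite dUV.
- by apply: measurableI; [exact: mW | exact: mev].
- by apply: measurableI; [exact: mW | exact: mev].
rewrite (ih _ _ ujs uc' dc' ucr dr' dUV') (ih _ _ ujs uc' dc' ucr dr' dUV').
rewrite !Pev_cat ?(uc _ jj) // big_cons.
by rewrite -ge0_muleDr ?mule_ge0 // -ge0_muleDl // muleA [_ * (_ + _)]muleC.
Qed.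
End L2sec.

End Indep.

Section Ana.
Context (R : realType) (beta p : R).
Hypotheses (hb : 0 < beta) (hp0 : 0 < p) (hp1 : p < 1) (hpb : p^-1 < beta).

Definition qq (m : nat) : R := 1 - expR (- (beta / m%:R)).
Definition aa (m : nat) : R := p * qq m.
Definition DD (n : nat) : R := \prod_(0 <= j < n.-1) (1 - aa (n - j)).

Lemma qq_ge0 m : 0 <= qq m.
Proof.
rewrite /qq subr_ge0 expR_le1 oppr_le0; apply: divr_ge0; [exact: ltW | exact: ler0n].
Qed.

Lemma qq_le1 m : qq m <= 1.
Proof. by rewrite /qq lerBlDr lerDl expR_ge0. Qed.

Lemma aa_ge0 m : 0 <= aa m.
Proof. by apply: mulr_ge0; [exact: ltW | exact: qq_ge0]. Qed.

Lemma aa_le1 m : aa m <= 1.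
Proof.
rewrite /aa; apply: (le_trans (ler_wpM2l (ltW hp0) (qq_le1 m))).
by rewrite mulr1 ltW.
Qed.

Lemma DD_ge0 n : 0 <= DD n.
Proof.
rewrite /DD; apply: prodr_ge0 => j _; rewrite subr_ge0; exact: aa_le1.
Qed.

Lemma DD_le1 n : DD n <= 1.
Proof.
rewrite /DD; apply: prodr_ile1 => j _; rewrite subr_ge0 aa_le1 /= lerBlDr lerDl; exact: aa_ge0.
Qed.

Lemma DD_rec n : (1 <= n)%N -> DD n.+1 = (1 - aa n.+1) * DD n.
Proof.
case: n => // n _; rewrite /DD /= big_nat_recl // subn0; congr (_ * _).
Qed.

Lemma qq_lb m : (0 < m)%N -> beta / (m%:R + beta) <= qq m.
Proof.
move=> m0; have mp : (0 : R) < m%:R by rewrite ltr0n.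
set x := beta / m%:R.
have xp : 0 < x by apply: divr_gt0.
have h1 : expR (- x) <= (1 + x)^-1.
  rewrite expRN lef_pV2 ?posrE ?expR_gt0 //; last by rewrite addr_gt0.
  exact: expR_ge1Dx.
have -> : beta / (m%:R + beta) = 1 - (1 + x)^-1.
  rewrite /x; field.
  by rewrite (lt0r_neq0 mp) lt0r_neq0 // addr_gt0.
by rewrite /qq lerD2l lerN2.
Qed.

Definition dl : R := (p * beta - 1) / 2.

Lemma pb_gt1 : 1 < p * beta.
Proof.
have h := hpb; rewrite -(ltr_pM2l hp0) mulfV in h => //; exact: lt0r_neq0.
Qed.

Lemma dl_gt0 : 0 < dl.
Proof. by rewrite /dl divr_gt0 // subr_gt0 pb_gt1. Qed.

Lemma key : exists M0 : nat, (1 <= M0)%N /\ (forall n : nat, (M0 <= n)%N -> 1 + dl <= n.+1%:R * aa n.+1).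
Proof.
exists (Num.truncn ((1 + dl) * beta / dl)).+1; split => // n hn.
set m : R := n.+1%:R.
have mp : 0 < m by rewrite ltr0n.
have hm : (1 + dl) * beta < m * dl.
  rewrite -ltr_pdivrMr ?dl_gt0 //; apply: (lt_le_trans (truncnS_gt _)).
  rewrite /m ler_nat; exact: (leq_trans hn).
have dp := dl_gt0.
apply: (@le_trans _ _ (m * (p * (beta / (m + beta))))).
  rewrite mulrA mulrA ler_pdivlMr ?addr_gt0 //.
  have e : m * p * beta = m * (1 + 2 * dl) by rewrite /dl; field.
  rewrite e; nra.
rewrite /aa ler_wpM2l ?(ltW mp) // ler_wpM2l ?(ltW hp0) //.
exact: qq_lb.
Qed.

Lemma tele K0 M : (1 <= K0)%N ->
  (forall n, (K0 <= n)%N -> 1 + dl <= n.+1%:R * aa n.+1) ->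
  dl * \sum_(K0 <= n < K0 + M) DD n + (K0 + M)%:R * DD (K0 + M) <= K0%:R * DD K0.
Proof.
move=> K1 hk; elim: M => [|M ih].
  by rewrite addn0 big_geq // mulr0 add0r.
apply: le_trans ih; rewrite addnS big_nat_recr ?leq_addr //= DD_rec; last first.
  exact: leq_trans K1 (leq_addr _ _).
have h := hk (K0 + M)%N (leq_addr _ _).
have D0 := DD_ge0 (K0 + M).
set S := \sum_(K0 <= i < K0 + M) DD i.
set D := DD (K0 + M) in D0 *.
set a := aa (K0 + M).+1 in h *.
rewrite -[(K0 + M).+1]addn1 natrD.
set n := (K0 + M)%:R.
nra.
Qed.

Lemma partial_bd K0 : (1 <= K0)%N ->
  (forall n, (K0 <= n)%N -> 1 + dl <= n.+1%:R * aa n.+1) ->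
  forall N, \sum_(0 <= n < N) DD n <= \sum_(0 <= n < K0) DD n + K0%:R * DD K0 / dl.
Proof.
move=> K1 hk N.
apply: (@le_trans _ _ (\sum_(0 <= n < K0 + N) DD n)).
  rewrite [X in _ <= X](big_cat_nat (n := N)) ?leq_addl //= lerDl.
  by apply: sumr_ge0 => i _; exact: DD_ge0.
rewrite (big_cat_nat (n := K0)) ?leq_addr //= lerD2l.
rewrite ler_pdivlMr ?dl_gt0 // mulrC.
apply: le_trans (tele N K1 hk).
rewrite lerDl; apply: mulr_ge0 => //; exact: DD_ge0.
Qed.

Lemma tail_small : exists K : nat, (\sum_(K.+1 <= n <oo) (DD n)%:E < 1)%E.
Proof.
have [K0 [K1 hk]] := key.
have g0 : forall n, (0 <= (DD n)%:E)%E by move=> n; rewrite lee_fin DD_ge0.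
have hB : (\sum_(0 <= n <oo) (DD n)%:E <=
   (\sum_(0 <= n < K0) DD n + K0%:R * DD K0 / dl)%:E)%E.
  apply: lime_le; first exact: is_cvg_ereal_nneg_natsum.
  by near=> N; rewrite sumEFin lee_fin; exact: partial_bd.
have fin : (\sum_(0 <= n <oo) (DD n)%:E < +oo)%E by apply: le_lt_trans hB (ltry _).
have tc := nneseries_tail_cvg fin (fun k _ => g0 k).
have [N _ hN] : \forall N \near \oo, fine (\sum_(N <= k <oo) (DD k)%:E) < 1.
  by apply: cvgr_lt (fine_cvg tc) _ _.
exists N; have := hN N.+1 (leqnSn N) => /= h.
have tfin : (\sum_(N.+1 <= k <oo) (DD k)%:E)%E \is a fin_num.
  rewrite ge0_fin_numE; last by apply: nneseries_ge0 => k _.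
  apply: le_lt_trans fin.
  rewrite (nneseries_split 0 N.+1) // add0n leeDr //.
  by apply: sume_ge0 => k _.
by rewrite -(fineK tfin) lte_fin.
Unshelve. all: by end_near.
Qed.

End Ana.

Lemma inf_iff (S : set int) : (forall v, S v -> 0 <= v) ->
  infinite_set S <-> forall M : nat, exists v : nat, (M <= v)%N /\ S v%:Z.
Proof.
move=> S0; split.
  move=> iS M; apply: contrapT => hno; apply: iS.
  apply: (@sub_finite_set _ _ (Posz @` `I_M)); last exact/finite_image/finite_II.
  move=> x Sx; have := S0 x Sx; case: x Sx => // v Sv _.
  exists v => //=; rewrite /= ltnNge; apply/negP => Mv; apply: hno; by exists v.
move=> hM fS.
pose s := fset_set S.
pose B := (\max_(y <- finmap.enum_fset s) `|y|%N)%N.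
have [v [Bv Sv]] := hM B.+1.
have : (`|v%:Z|%N <= B)%N.
  apply: leq_bigmax_seq => //; have := in_fset_set fS v%:Z; rewrite (mem_set Sv) => h; exact: h.
by rewrite absz_nat leqNgt Bv.
Qed.

Notation conn := Pilot.Defs.connected.
Section Conn.
Context (T : Type) (Nr : int -> T -> nat) (Bo : int -> nat -> T -> bool) (t : T).

Lemma edge_lt a b : open_edge Nr Bo t a b -> a < b.
Proof. by case=> k [-> _]; rewrite ltrDl. Qed.

Lemma conn_le a b : conn Nr Bo t a b -> a <= b.
Proof.
elim=> // x y z /edge_lt xy _ yz; exact: le_trans (ltW xy) yz.
Qed.

Lemma conn_snoc a b c : conn Nr Bo t a b -> open_edge Nr Bo t b c ->
  conn Nr Bo t a c.
Proof.
elim=> [x|x y z exy _ ih] e; first by apply: conn_step e (conn_refl _ _ _ _).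
exact: conn_step exy (ih e).
Qed.

Lemma conn_last a c : conn Nr Bo t a c ->
  a = c \/ exists b, conn Nr Bo t a b /\ open_edge Nr Bo t b c.
Proof.
elim=> [x|x y z exy cyz [<-|[b [cyb ebz]]]]; first by left.
  by right; exists x; split => //; exact: conn_refl.
by right; exists b; split => //; exact: conn_step exy cyb.
Qed.
End Conn.

Section Meas.
Context (d : measure_display) (T : measurableType d)
  (Nr : int -> T -> nat) (Bo : int -> nat -> T -> bool).
Hypothesis mN : forall i k, measurable [set t | Nr i t = k].
Hypothesis mB : forall i k, measurable [set t | Bo i k t].

Lemma mge i L : measurable [set t | (L <= Nr i t)%N].
Proof.
rewrite (_ : [set t | _] = \bigcup_(m in [set m | (L <= m)%N]) [set t | Nr i t = m]).
  by apply: bigcup_measurable => m _; exact: mN.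
by apply/seteqP; split => t /=; [move=> h; exists (Nr i t) | case=> m hm ->].
Qed.

Lemma medge a b : measurable [set t | open_edge Nr Bo t a b].
Proof.
rewrite (_ : [set t | _] = \bigcup_(k in [set k : nat | b = a + k.+1%:Z])
   ([set t | (k.+1 <= Nr a t)%N] `&` [set t | Bo a k t])).
  by apply: bigcup_measurable => k _; apply: measurableI; [exact: mge | exact: mB].
apply/seteqP; split => t /=; first by case=> k [h1 [h2 h3]]; exists k.
by case=> k h1 [h2 h3]; exists k.
Qed.

Definition CC (v : nat) : set T := [set t | conn Nr Bo t 0 v%:Z].

Lemma mCC v : measurable (CC v).
Proof.
elim/ltn_ind: v => -[_|w ih].
  rewrite (_ : CC 0 = setT) //; apply/seteqP; split => t // _.
  exact: Pilot.Defs.conn_refl.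
rewrite (_ : CC w.+1 = \bigcup_(j in [set j | (j < w.+1)%N])
    (CC j `&` [set t | open_edge Nr Bo t j%:Z w.+1%:Z])).
  apply: bigcup_measurable => j jw; apply: measurableI; last exact: medge.
  exact: ih.
apply/seteqP; split => t /=.
  move=> hc; have [e|[b [cb eb]]] := conn_last hc.
    by move: e => /eqP.
  have b0 := conn_le cb; have bw := edge_lt eb.
  case: b b0 cb eb bw => // j _ cb eb bw.
  by exists j => //; rewrite /= -ltz_nat.
by case=> j _ [cj ej]; exact: conn_snoc cj ej.
Qed.

Lemma perc_eq : perc_event Nr Bo =
  \bigcap_(M in [set: nat]) \bigcup_(v in [set v | (M <= v)%N]) CC v.
Proof.
apply/seteqP; split => t /=.
  move=> /inf_iff h M _; have [v [Mv cv]] := h (fun v => @conn_le _ _ _ _ _ _) M.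
  by exists v.
move=> h; apply/inf_iff; first by move=> v; exact: conn_le.
by move=> M; have [v Mv cv] := h M I; exists v.
Qed.

Lemma mperc : measurable (perc_event Nr Bo).
Proof.
rewrite perc_eq; apply: bigcap_measurableType => M _.
by apply: bigcup_measurable => v _; exact: mCC.
Qed.
End Meas.

Section Sets.
Context (d : measure_display) (T : measurableType d) (Nr : int -> T -> nat) (Bo : int -> nat -> T -> bool).

Definition Ev (K : nat) : set T :=
  [set t | forall j : nat, (j < K)%N -> (1 <= Nr j t)%N /\ Bo j 0%N t].
Definition An (n : nat) : set T :=
  [set t | exists j : nat, (j < n.-1)%N /\ (n - j <= Nr j t)%N /\ Bo j (n - j - 1)%N t].

Definition cE (j : nat) : seq pidx := [:: inl (Posz j); inr (Posz j, 0%N)].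
Definition YUE : pidx -> set nat := fun i =>
  match i with inl _ => [set m | (1 <= m)%N] | inr _ => [set 1%N] end.
Definition cn (n j : nat) : seq pidx :=
  [:: inl (Posz j); inr (Posz j, 0%N); inr (Posz j, (n - j - 1)%N)].
Definition lo (K j : nat) : nat := if (j < K)%N then 1%N else 0%N.
Definition Y0 (K j : nat) : set nat := if (j < K)%N then [set 1%N] else setT.
Definition YUn (K n : nat) : pidx -> set nat := fun i =>
  match i with
  | inl (Posz j) => [set m | (lo K j <= m)%N && (m < n - j)%N]
  | inl (Negz _) => setT
  | inr (Posz j, k) => if k == 0%N then Y0 K j else setT
  | inr (Negz _, _) => setT
  end.
Definition YVn (K n : nat) : pidx -> set nat := fun i =>
  match i with
  | inl (Posz j) => [set m | (n - j <= m)%N]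
  | inl (Negz _) => setT
  | inr (Posz j, k) => if k == 0%N then Y0 K j else [set 0%N]
  | inr (Negz _, _) => setT
  end.

Lemma ev2 (a b : pidx) Y t : ev Nr Bo [:: a; b] Y t <->
  Y a (pvar Nr Bo a t) /\ Y b (pvar Nr Bo b t).
Proof.
split => [h|[h1 h2] i]; first by split; apply: h; rewrite !inE eqxx ?orbT.
by rewrite !inE => /orP[/eqP->|/eqP->].
Qed.

Lemma ev3 (a b c : pidx) Y t : ev Nr Bo [:: a; b; c] Y t <->
  Y a (pvar Nr Bo a t) /\ Y b (pvar Nr Bo b t) /\ Y c (pvar Nr Bo c t).
Proof.
split => [h|[h1 [h2 h3]] i]; first by split; [|split]; apply: h; rewrite !inE eqxx ?orbT.
by rewrite !inE => /orP[/eqP->|/orP[/eqP->|/eqP->]].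
Qed.

Lemma S2 K : Ev K = W Nr Bo cE YUE (fun _ => set0) (iota 0 K).
Proof.
apply/seteqP; split => t /=.
  move=> h j; rewrite mem_iota add0n => /andP[_ jK]; left.
  by apply/ev2; have [h1 h2] := h j jK; split => //=; rewrite h2.
move=> h j jK; have := h j; rewrite mem_iota add0n jK => /(_ isT) [|].
  by move/ev2 => /= [h1]; case: (Bo j 0%N t).
by move/ev2 => [].
Qed.

Lemma S1 K n : (K < n)%N ->
  Ev K `&` ~` An n = W Nr Bo (cn n) (YUn K n) (YVn K n) (iota 0 n.-1).
Proof.
move=> Kn; apply/seteqP; split => t /=.
  case=> hE hA j; rewrite mem_iota add0n => /andP[_ jn].
  have k0 : (n - j - 1 == 0)%N = false by apply/negbTE; rewrite -lt0n subn_gt0 ltn_subRL addn1 -ltn_predRL.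
  have h0 : Y0 K j (pvar Nr Bo (inr (Posz j, 0%N)) t).
    rewrite /Y0; case: ifP => // jK; have [_ hb] := hE j jK; by rewrite /= hb.
  case: (leqP (n - j) (Nr j t)) => hN.
    right; apply/ev3; rewrite /= k0; split => //; split => //.
    case hb: (Bo j (n - j - 1)%N t) => //; exfalso; apply: hA; by exists j.
  left; apply/ev3; rewrite /= k0; split => //; rewrite hN andbT /lo.
  by case: ifP => // jK; have [] := hE j jK.
move=> h; split.
  move=> j jK; have jn : (j < n.-1)%N by rewrite -ltnS prednK ?(leq_ltn_trans _ Kn) // (leq_trans jK).
  have := h j; rewrite mem_iota add0n jn => /(_ isT) [/ev3|/ev3] /=; rewrite /Y0 jK.
    by case=> h1 [h2 _]; split; [move: h1; rewrite /lo jK => /andP[] | case: (Bo j 0%N t) h2].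
  case=> h1 [h2 _]; split; last by case: (Bo j 0%N t) h2.
  by apply: leq_trans h1; rewrite subn_gt0 (leq_trans jn) // leq_pred.
case=> j [jn [hN hB]].
have k0 : (n - j - 1 == 0)%N = false by apply/negbTE; rewrite -lt0n subn_gt0 ltn_subRL addn1 -ltn_predRL.
have := h j; rewrite mem_iota add0n jn => /(_ isT) [/ev3|/ev3] /=; rewrite k0.
  by case=> /andP[_]; rewrite ltnNge hN.
by case=> _ [_]; rewrite hB.
Qed.

End Sets.

Section Main.
Local Open Scope ereal_scope.
Context (d : measure_display) (T : measurableType d) (R : realType)
  (P : probability T R) (beta p : R) (Nr : int -> T -> nat) (Bo : int -> nat -> T -> bool).
Hypotheses (hb : (0 < beta)%R) (hp0 : (0 < p)%R) (hp1 : (p < 1)%R)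
  (mN : forall i k, measurable [set t | Nr i t = k])
  (mB : forall i k, measurable [set t | Bo i k t])
  (hN : forall i (n : nat), (1 <= n)%N ->
     P [set t | (n <= Nr i t)%N] = (1 - expR (- (beta / n%:R)))%:E)
  (hBo : forall i k, P [set t | Bo i k t] = p%:E)
  (ind : discrete_mutually_independent P (pvar Nr Bo))
  (hpb : (p^-1 < beta)%R).

Local Notation X := (pvar Nr Bo).

Lemma PT j : P (X j @^-1` setT) = 1.
Proof. by rewrite preimage_setT probability_setT. Qed.

Lemma PB1 i k : P (X (inr (i, k)) @^-1` [set 1%N]) = p%:E.
Proof.
rewrite -(hBo i k); congr (P _); apply/seteqP; split => t /=; by case: (Bo i k t).
Qed.

Lemma PB0 i k : P (X (inr (i, k)) @^-1` [set 0%N]) = (1 - p)%:E.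
Proof.
rewrite (_ : _ @^-1` _ = ~` [set t | Bo i k t]); last first.
  by apply/seteqP; split => t /=; case: (Bo i k t).
by rewrite probability_setC // hBo EFinB.
Qed.

Lemma PY0 K j : P (X (inr (Posz j, 0%N)) @^-1` Y0 K j) = (if (j < K)%N then p else 1)%:E.
Proof. by rewrite /Y0; case: ifP => _; [exact: PB1 | exact: PT]. Qed.

Lemma PNge j L : (1 <= L)%N -> P (X (inl (Posz j)) @^-1` [set m | (L <= m)%N]) = (qq beta L)%:E.
Proof. by move=> L1; exact: (hN j L1). Qed.

Lemma PNint j lo0 L : (lo0 <= L)%N ->
  P (X (inl (Posz j)) @^-1` [set m | (lo0 <= m)%N && (m < L)%N]) +
  P (X (inl (Posz j)) @^-1` [set m | (L <= m)%N]) =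
  P (X (inl (Posz j)) @^-1` [set m | (lo0 <= m)%N]).
Proof.
move=> lL; rewrite -measureU; first last.
- by apply/seteqP; split => t //= [/andP[_]]; rewrite ltnNge => /negbTE ->.
- exact: mX.
- exact: mX.
congr (P _); apply/seteqP; split => t /=.
  by case=> [/andP[]//|]; apply: leq_trans.
by move=> h; case: (ltnP (Nr j t) L) => hl; [left; rewrite h | right].
Qed.

Lemma site K n j : (K < n)%N -> (j < n.-1)%N ->
  P (ev Nr Bo (cn n j) (YUn K n)) + P (ev Nr Bo (cn n j) (YVn K n)) <=
  ((if (j < K)%N then p * qq beta 1 else 1) * (1 - aa beta p (n - j)))%:E.
Proof.
move=> Kn jn.
have jn' : (j.+2 <= n)%N by rewrite -ltn_predRL.
have L2 : (2 <= n - j)%N by lia.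
have k0 : (n - j - 1 == 0)%N = false by apply/negbTE; lia.
have uc : uniq (cn n j).
  by rewrite /cn /= !inE /= andbT; apply/negP => /eqP [] /esym /eqP; rewrite k0.
rewrite !(L1 mN mB ind) // !big_cons !big_nil !mule1 /= k0 PY0 PT PB0.
have lo1 : (lo K j <= 1)%N by rewrite /lo; case: ifP.
have hint := @PNint j (lo K j) (n - j) (leq_trans lo1 (ltnW L2)).
rewrite PNge in hint; last exact: ltnW.
rewrite PNge; last exact: ltnW.
set A := P _ in hint *.
have Af : A \is a fin_num by apply: Pfin; exact: mX.
rewrite -(fineK Af) in hint *.
have q0 := qq_ge0 hb (n - j)%N.
have q1 := qq_le1 beta (n - j)%N.
have p0 := ltW hp0.
have qa0 := qq_ge0 hb 1%N.
have qa1 := qq_le1 beta 1%N.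
rewrite /aa.
case: ifP => jK.
  move: hint; rewrite /lo jK PNge // -EFinD => /eqP; rewrite eqe => /eqP hint.
  rewrite -!EFinM -EFinD lee_fin.
  set a := fine A in hint *; set q := qq beta (n - j) in hint q0 q1 *.
  set q' := qq beta 1 in hint qa0 qa1 *.
  have ea : a = (q' - q)%R by rewrite -hint; ring.
  have h : (0 <= p * p * q * (1 - q'))%R.
    by rewrite !mulr_ge0 // subr_ge0.
  rewrite ea; nra.
move: hint; rewrite /lo jK.
rewrite (_ : P _ = 1); last first.
  by rewrite -(PT (inl (Posz j))); congr (P _); apply/seteqP; split.
rewrite -EFinD => /eqP; rewrite eqe => /eqP hint.
rewrite -!EFinM -EFinD lee_fin.
set a := fine A in hint *; set q := qq beta (n - j) in hint q0 q1 *.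
nra.
Qed.

Lemma prod_c (c : R) K m : (K <= m)%N ->
  (\prod_(0 <= j < m) (if (j < K)%N then c else 1) = c ^+ K)%R.
Proof.
move=> Km; rewrite (big_cat_nat (n := K)) //=.
rewrite (eq_big_nat _ _ (F2 := fun _ => c)); last by move=> i /andP[_ ->].
rewrite prodr_const_nat subn0 big1_seq ?mulr1 // => i.
by move=> /andP[_]; rewrite mem_index_iota => /andP[Ki _]; rewrite ltnNge Ki.
Qed.

Lemma lee_prod_seq (s : seq nat) (f g : nat -> \bar R) :
  (forall j, j \in s -> 0 <= f j /\ f j <= g j) ->
  \prod_(j <- s) f j <= \prod_(j <- s) g j.
Proof.
elim: s => [|j s ih] h; first by rewrite !big_nil.
rewrite !big_cons; have [h0 h1] := h j (mem_head _ _).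
have hs : forall i, i \in s -> 0 <= f i /\ f i <= g i.
  by move=> i is'; apply: h; rewrite inE is' orbT.
apply: lee_pmul => //; last exact: ih.
by rewrite big_seq; apply: prode_ge0 => i is'; have [] := hs i is'.
Qed.

Lemma iotaE m : iota 0 m = index_iota 0 m.
Proof. by rewrite /index_iota subn0. Qed.

Lemma PE K : P (Ev Nr Bo K) = ((p * qq beta 1) ^+ K)%:E.
Proof.
rewrite S2 -[W _ _ _ _ _ _]setIT -(ev_nil Nr Bo (fun _ => setT)).
rewrite (L2 mN mB ind (c := cE) (YU := YUE) (YV := fun _ => set0)) //; first last.
- move=> j _; apply/seteqP; split => t // [_ /ev2 [] []].
- move=> j j' i _ _; rewrite !inE => /orP[/eqP->|/eqP->] /orP[/eqP h|/eqP h]; by case: h; try move=> ->.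
- exact: iota_uniq.
rewrite ev_nil probability_setT mule1.
rewrite (eq_bigr (fun _ => (p * qq beta 1)%:E)); last first.
  move=> j _; rewrite !(L1 mN mB ind) // !big_cons !big_nil !mule1.
  rewrite (_ : P (X (inl (Posz j)) @^-1` set0) = 0); last by rewrite preimage_set0 measure0.
  by rewrite mul0e adde0 /= PNge // PB1 -EFinM mulrC.
by rewrite prodEFin iotaE prodr_const_nat subn0.
Qed.

Lemma PEA K n : (K < n)%N ->
  P (Ev Nr Bo K `&` ~` An Nr Bo n) <= ((p * qq beta 1) ^+ K * DD beta p n)%:E.
Proof.
move=> Kn; rewrite (S1 _ _ Kn) -[W _ _ _ _ _ _]setIT -(ev_nil Nr Bo (fun _ => setT)).
rewrite (L2 mN mB ind (c := cn n) (YU := YUn K n) (YV := YVn K n)) //; first last.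
- move=> j; rewrite mem_iota add0n => /andP[_ jn]; apply/seteqP; split => t //.
  case=> /ev3 [h1 _] /ev3 [h2 _]; move: h1 h2 => /= /andP[_].
  by rewrite ltnNge => /negbTE ->.
- move=> j j' i _ _; rewrite !inE => /or3P[]/eqP-> /or3P[]/eqP h; by case: h; intros; subst.
- move=> j; rewrite mem_iota add0n => /andP[_ jn].
  have jn' : (j.+2 <= n)%N by rewrite -ltn_predRL.
  have k0 : (n - j - 1 == 0)%N = false by apply/negbTE; lia.
  by rewrite /cn /= !inE /= andbT; apply/negP => /eqP [] /esym /eqP; rewrite k0.
- exact: iota_uniq.
rewrite ev_nil probability_setT mule1.
apply: le_trans (lee_prod_seq (g := fun j => ((if (j < K)%N then p * qq beta 1 else 1) * (1 - aa beta p (n - j)))%:E) _) _.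
  move=> j; rewrite mem_iota add0n => /andP[_ jn]; split; first by rewrite adde_ge0.
  exact: site.
rewrite prodEFin lee_fin iotaE big_split /= prod_c //.
by rewrite -ltnS prednK // (leq_ltn_trans _ Kn).
Qed.

Lemma mEv K : measurable (Ev Nr Bo K).
Proof. by rewrite S2; exact: mW. Qed.

Lemma mEA K n : (K < n)%N -> measurable (Ev Nr Bo K `&` ~` An Nr Bo n).
Proof. by move=> Kn; rewrite (S1 _ _ Kn); exact: mW. Qed.

Lemma G_perc K t : Ev Nr Bo K t ->
  (forall n, (K < n)%N -> ~ (Ev Nr Bo K `&` ~` An Nr Bo n) t) ->
  perc_event Nr Bo t.
Proof.
move=> hE hA.
have hc : forall v : nat, conn Nr Bo t 0 v%:Z.
  elim/ltn_ind => -[_|v ih]; first exact: Pilot.Defs.conn_refl.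
  case: (ltnP v K) => vK.
    apply: (conn_snoc (ih v (ltnSn v))); have [h1 h2] := hE v vK.
    by exists 0%N; split; [rewrite -addn1 PoszD | split].
  have : An Nr Bo v.+1 t.
    apply: contrapT => nA; exact: (hA v.+1 vK).
  case=> j [jv [hNj hB]]; apply: (conn_snoc (ih j (ltnW jv))).
  have e1 : (v.+1 - j = (v - j).+1)%N by rewrite subSn // ltnW.
  exists (v - j)%N; split; last by rewrite -e1; split => //; move: hB; rewrite e1 subn1.
  by rewrite -PoszD addnS subnKC // ltnW.
apply/inf_iff; first by move=> v; exact: conn_le.
by move=> M; exists M; split.
Qed.

Lemma main_pos : 0 < P (perc_event Nr Bo).
Proof.
have [K hK] := tail_small hb hp0 hp1 hpb.
set e := ((p * qq beta 1) ^+ K)%R.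
have q10 : (0 < qq beta 1)%R.
  apply: lt_le_trans (qq_lb hb (isT : (0 < 1)%N)).
  by rewrite divr_gt0 // addr_gt0.
have e0 : (0 < e)%R by rewrite exprn_gt0 // mulr_gt0.
pose F n := if (K < n)%N then Ev Nr Bo K `&` ~` An Nr Bo n else set0.
have mF n : measurable (F n) by rewrite /F; case: ifP => // Kn; exact: mEA.
pose U := \bigcup_n F n.
have mU : measurable U by exact: bigcupT_measurable.
pose G := Ev Nr Bo K `\` U.
have mG : measurable G by apply: measurableD => //; exact: mEv.
have GP : G `<=` perc_event Nr Bo.
  move=> t [hE hU]; apply: G_perc hE _ => n Kn hn; apply: hU; exists n => //.
  by rewrite /F Kn.
have eq1 : P (Ev Nr Bo K) = P G + P (Ev Nr Bo K `&` U).
  rewrite {1}(_ : Ev Nr Bo K = G `|` (Ev Nr Bo K `&` U)).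
    rewrite measureU //.
    - by apply: measurableI => //; exact: mEv.
    - by apply/seteqP; split => // t [[_ h] [_ h']].
  apply/seteqP; split => t /=.
    by move=> h; have [hu|hu] := pselect (U t); [right|left].
  by case=> -[].
have b1 : P (Ev Nr Bo K `&` U) <= \sum_(n <oo) P (F n).
  by apply: measure_sigma_subadditive => //; apply: measurableI => //; exact: mEv.
have b2 : \sum_(n <oo) P (F n) <= e%:E * \sum_(K.+1 <= n <oo) (DD beta p n)%:E.
  rewrite (nneseries_split 0 K.+1) // add0n big1_seq ?add0e; last first.
    move=> i /andP[_]; rewrite mem_index_iota => /andP[_ iK].
    by rewrite /F ltnNge -ltnS iK /= measure0.
  rewrite -nneseriesZl; last by move=> i _; rewrite lee_fin DD_ge0.
  apply: lee_nneseries => // n _; rewrite /F; case: ifP => Kn.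
    by rewrite -EFinM; exact: PEA.
  by rewrite measure0 -EFinM lee_fin mulr_ge0 ?DD_ge0 // ltW.
have b3 : e%:E * \sum_(K.+1 <= n <oo) (DD beta p n)%:E < e%:E.
  rewrite -[X in _ < X]mule1 lte_pmul2l //.
have hPG : 0 < P G.
  rewrite lt_neqAle measure_ge0 andbT; apply/eqP => hG0.
  have := le_lt_trans (le_trans b1 b2) b3.
  by rewrite /e -(PE K) eq1 -hG0 add0e ltxx.
apply: lt_le_trans hPG _; apply: le_measure => //; rewrite inE //; exact: mperc.
Qed.

End Main.

Unset Implicit Arguments. Set Strict Implicit. Set Printing Implicit Defensive.

Theorem theorem6 (d : measure_display) (T : measurableType d) (R : realType)
  (P : probability T R) (beta p : R)
  (Nr : int -> T -> nat) (Bo : int -> nat -> T -> bool) :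
  0 < beta -> 0 < p -> p < 1 ->
  (forall i k, measurable [set t | Nr i t = k]) ->
  (forall i k, measurable [set t | Bo i k t]) ->
  (* N_i has law N: P(N >= n) = 1 - exp(-beta/n) for n >= 1 *)
  (forall i (n : nat), (1 <= n)%N ->
     P [set t | (n <= Nr i t)%N] = (1 - expR (- (beta / n%:R)))%:E) ->
  (* each bond is open with probability p *)
  (forall i k, P [set t | Bo i k t] = p%:E) ->
  (* all ranges and bond states are mutually independent *)
  discrete_mutually_independent P (pvar Nr Bo) ->
  p^-1 < beta ->
  measurable (perc_event Nr Bo) /\ (0 < P (perc_event Nr Bo))%E.
Proof.
move=> hb hp0 hp1 mN mB hN hBo ind hpb; split; first exact: mperc.
exact: (main_pos hb hp0 hp1 mN mB hN hBo ind hpb).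
Qed.
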